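(* Let $m_0<m$ be the number of true null hypotheses (i.e. $m_0=\#\{i:d^t_i=0\}$), and assume $m_0\ge1$. For the additive-loss procedure with constant threshold $\beta$ (decisions $\hat d_i=I(v_{in}>\beta)$), let $pBFDR_\beta$ be its $pBFDR$. Then for any $0<\alpha<m_0/m$ there exists a sequence $\beta_n\to0$ as $n\to\infty$ such that $\lim_{n\to\infty}pBFDR_{\beta_n}=\alpha$.
   Context: Data and models: $\mathbf X_n=(X_1,\ldots,X_n)$ are the first $n$ coordinates of a process with true distribution $P$; $p(\mathbf X_n)$ is the true joint density and $f_{\boldsymbol\theta}(\mathbf X_n)$ the postulated density for $\boldsymbol\theta=(\theta_1,\ldots,\theta_M)\in\boldsymbol\Theta=\Theta_1\times\cdots\times\Theta_M$ ($M\le\infty$). $\pi$ is a prior, $\pi(\cdot\mid\mathbf X_n)$ the posterior; $E_{\mathbf X_n}$ is expectation over the data under $P$. For $i=1,\ldots,m$ ($m$ finite) one tests $H_{0i}:\theta_i\in\Theta_{0i}$ vs $H_{1i}:\theta_i\in\Theta_{1i}$ with $\Theta_{0i}\cap\Theta_{1i}=\emptyset$, $\Theta_{0i}\cup\Theta_{1i}=\Theta_i$. Decision configurations $\mathbf d\in\mathbb D=\{0,1\}^m$ ($d_i=1$: reject $H_{0i}$); $\mathbf 0$ is the all-zero configuration. KL quantities: $h(\boldsymbol\theta)=\lim_n n^{-1}E_P[\log(p/f_{\boldsymbol\theta})(\mathbf X_n)]$, $J(\boldsymbol\theta)=h(\boldsymbol\theta)-h(\boldsymbol\Theta)$ where $h(A)=\pi\text{-}\operatorname{ess\,inf}_A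 h$, and $J(A)=\pi\text{-}\operatorname{ess\,inf}_A J$. The true configuration $\mathbf d^t$ is the unique $\mathbf d$ with $J(\prod_{i\le m}\Theta_{d_ii}\times\prod_{i>m}\Theta_i)=J(\boldsymbol\Theta)$, where $\Theta_{d_ii}$ is $\Theta_{0i}$ or $\Theta_{1i}$ according as $d_i=0$ or $1$. Let $\Upsilon_{ki}=\{\boldsymbol\theta:\theta_i\in\Theta_{ki}\}$, $J(H_{ki})=J(\Upsilon_{ki})$ and $v_{in}=\pi(\Upsilon_{1i}\mid\mathbf X_n)$. Standing assumption (conclusion of Shalizi's (2009) theorem under his conditions (S1)–(S7), assumed throughout): for all $i,k$, $\pi(\Upsilon_{ki})>0$ and $\lim_n n^{-1}\log\pi(\Upsilon_{ki}\mid\mathbf X_n)=-J(\Upsilon_{ki})$ a.s.; $J(H_{1i})>0$ if $d^t_i=0$ and $J(H_{0i})>0$ if $d^t_i=1$. Error measures for a procedure with decision indicator $\delta$: $FDR_{\mathbf X_n}=\sum_{\mathbf d}\frac{\sum_i d_i(1-v_{in})}{(\sum_i d_i)\vee1}\delta(\mathbf d\mid\mathbf X_n)$, $pBFDR=E_{\mathbf X_n}[FDR_{\mathbf X_n}\mid\delta(\mathbf 0\mid\mathbf X_n)=0]$. Known fact used (Chandra and Bhattacharya 2017): for each $n$, $\beta\mapsto pBFDR_\beta$ is continuous and non-increasing on $[0,1]$. *)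

(* Defs.v *)
From HB Require Import structures.
From mathcomp Require Import all_boot all_order all_algebra.
From mathcomp Require Import all_classical all_reals all_analysis.
Set Implicit Arguments. Unset Strict Implicit. Unset Printing Implicit Defensive.
Import Order.TTheory GRing.Theory Num.Theory.
Local Open Scope classical_set_scope.
Local Open Scope ring_scope.

(* Decision configurations d in {0,1}^m, d i = true means "reject H_{0i}". *)
Definition config (m : nat) := {ffun 'I_m -> bool}.

(* FDR_{X_n} for a decision rule delta(.|X_n), given posterior
   probabilities v_i = pi(Upsilon_{1i} | X_n):
   sum_d [ sum_i d_i (1 - v_i) / ((sum_i d_i) \/ 1) ] delta(d | X_n). *)
Definition FDRX {R : realType} (m : nat) (v : 'I_m -> R)
  (delta : config m -> R) : R :=
  \sum_(d : config m)
     ((\sum_(i < m) (d i)%:R * (1 - v i)) / (maxn (\sum_(i < m) d i) 1)%:R)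
       * delta d.

Definition config0 (m : nat) : config m := [ffun => false].

Definition dhat {R : realType} (m : nat) (beta : R) (v : 'I_m -> R) : config m :=
  [ffun i => beta < v i].

Definition delta_beta {R : realType} (m : nat) (beta : R) (v : 'I_m -> R)
  (d : config m) : R := (d == dhat beta v)%:R.

(* pBFDR = E[ FDR_{X_n} | delta(0 | X_n) = 0 ]
         = E[ FDR_{X_n} 1{delta(0|X_n)=0} ] / P(delta(0|X_n) = 0),
   where v n i w is the posterior probability v_{in} computed from the
   data X_n(w). *)
Definition pBFDR {R : realType} {dT : measure_display} {Omega : measurableType dT}
  (P : probability Omega R) (m : nat) (v : nat -> 'I_m -> Omega -> R)
  (n : nat) (beta : R) : R :=
  let A := [set w | delta_beta beta (fun i => v n i w) (config0 m) = 0] in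
  fine (\int[P]_(w in A) (FDRX (fun i => v n i w) (delta_beta beta (fun i => v n i w)))%:E)
  / fine (P A).

(* Main.v *)
Require Import Defs.
From HB Require Import structures.
From mathcomp Require Import all_boot all_order all_algebra.
From mathcomp Require Import all_classical all_reals all_analysis.
From mathcomp Require Import measurable_realfun ring lra.
Import Order.TTheory GRing.Theory Num.Theory.
Import numFieldNormedType.Exports.
Local Open Scope classical_set_scope.
Local Open Scope ring_scope.
Lemma EFin_cvgn (R : realType) (u : nat -> R) (c : R) :
  u @ \oo --> c -> (fun n => (u n)%:E) @ \oo --> c%:E.
Proof. by move=> H; apply: cvg_EFin => //; exact: nearW. Qed.

Lemma bdd_cvg d (T : measurableType d) (R : realType) (P : probability T R)
  (h : nat -> T -> R) (c : R) :
  (forall n, measurable_fun setT (h n)) -> (forall n w, 0 <= h n w <= 1) ->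
  {ae P, forall w, h ^~ w @ \oo --> c} ->
  (fun n => fine (\int[P]_w (h n w)%:E)) @ \oo --> c.
Proof.
move=> mh h01 hc.
have mh' : forall n, measurable_fun setT (EFin \o h n).
  by move=> n; apply/measurable_EFinP.
have hc' : {ae P, forall w, setT w -> (fun n => (h n w)%:E) @ \oo --> (cst c%:E) w}.
  by apply: filterS hc => w Hw _; exact: EFin_cvgn.
have hb : {ae P, forall w n, setT w -> (`|(h n w)%:E| <= (cst 1%:E) w)%E}.
  apply: aeW => w n _ /=; rewrite lee_fin.
  by have /andP[h0 h1] := h01 n w; rewrite ger0_norm.
have [_ _ H] := @dominated_convergence _ _ _ P setT measurableT
  (fun n w => (h n w)%:E) (cst c%:E) (cst 1%:E) mh' (measurable_cst _) hc'
  (finite_measure_integrable_cst _ _ measurableT) hb.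
move: H; rewrite integral_cst //.
rewrite [X in (_ * X)%E]probability_setT mule1 => H.
by have [] := (fine_cvgP _ _).1 H.
Qed.

Lemma null_small (R : realType) (u : nat -> R) (J : R) :
  (forall n, 0 <= u n <= 1) -> 0 < J ->
  (fun n : nat => n%:R^-1 * ln (u n)) @ \oo --> - J ->
  forall eps, 0 < eps -> \forall n \near \oo, 0 < u n < eps.
Proof.
move=> u01 J0 Hc eps eps0.
set e := Num.min eps 1.
have e0 : 0 < e by rewrite lt_min eps0 ltr01.
have ee : e <= eps by rewrite ge_min lexx.
have e1 : e <= 1 by rewrite ge_min lexx orbT.
have le0 : ln e <= 0 by exact: ln_le0.
have H1 : \forall n \near \oo, n%:R^-1 * ln (u n) < - J / 2.
  by apply: (cvgr_lt _ Hc); lra.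
have H2 := nbhs_infty_ger (1 + (- ln e) * 2 / J).
near=> n.
have Hn : 1 + (- ln e) * 2 / J <= n%:R by near: n.
have Hl : n%:R^-1 * ln (u n) < - J / 2 by near: n.
have n0 : 0 < n%:R :> R.
  have : 0 <= (- ln e) * 2 / J by rewrite divr_ge0 ?mulr_ge0 ?oppr_ge0 // ltW.
  lra.
have Hl2 : ln (u n) < n%:R * (- J / 2).
  by rewrite -ltr_pdivrMl.
have Hn2 : n%:R * (- J / 2) <= ln e - J / 2.
  have : (1 + (- ln e) * 2 / J) * (J / 2) <= n%:R * (J / 2).
    by rewrite ler_pM2r // divr_gt0.
  have -> : (1 + (- ln e) * 2 / J) * (J / 2) = J / 2 - ln e.
    by field; rewrite gt_eqF.
  lra.
have Hl3 : ln (u n) < ln e by lra.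
have u0 : 0 < u n.
  rewrite ltNge; apply/negP => Hu; move: Hl3; rewrite ln0 //; lra.
apply/andP; split => //.
apply: (lt_le_trans _ ee).
by rewrite -ltr_ln // posrE.
Unshelve. all: by end_near. Qed.

Lemma eq_ffun_prod (R : realType) m (d e : config m) :
  (d == e)%:R = \prod_(i < m) ((d i == e i)%:R : R).
Proof.
case: eqP => [->|ne].
  by rewrite big1 // => i _; rewrite eqxx.
have [i Hi] : exists i, d i != e i.
  apply/existsP; apply: contra_notT ne; rewrite negb_exists => /forallP H.
  by apply/ffunP => i; apply/eqP; have := H i; rewrite negbK.
by rewrite (bigD1 i) //= (negbTE Hi) mul0r.
Qed.

Lemma FDRX_dhat (R : realType) m (beta : R) (v : 'I_m -> R) :
  FDRX v (delta_beta beta v) =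
  (\sum_(i < m) (beta < v i)%R%:R * (1 - v i)) / (maxn (\sum_(i < m) nat_of_bool (beta < v i)%R) 1)%:R.
Proof.
rewrite /FDRX (bigD1 (dhat beta v)) //= [X in _ + X]big1 ?addr0.
  rewrite /delta_beta eqxx mulr1.
  congr (_ / _); first by apply: eq_bigr => i _; rewrite ffunE.
  by congr ((maxn _ 1)%:R); apply: eq_bigr => i _; rewrite ffunE.
by move=> d Hd; rewrite /delta_beta (negbTE Hd) mulr0.
Qed.

Lemma delta0P (R : realType) m (beta : R) (v : 'I_m -> R) :
  delta_beta beta v (config0 m) = 0 <-> exists i, beta < v i.
Proof.
rewrite /delta_beta; split.
  case: eqP => [_|ne _]; first by move/eqP; rewrite oner_eq0.
  have [i Hi] : exists i, config0 m i != dhat beta v i.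
    apply/existsP; apply: contra_notT ne; rewrite negb_exists => /forallP H.
    by apply/ffunP => i; apply/eqP; have := H i; rewrite negbK.
  by exists i; move: Hi; rewrite !ffunE; case: (beta < v i).
move=> [i Hi]; case: eqP => // /ffunP /(_ i); rewrite !ffunE Hi //.
Qed.

Section meas.
Context (R : realType) (dT : measure_display) (Omega : measurableType dT) (m : nat)
  (v : 'I_m -> Omega -> R) (Hmeas : forall i, measurable_fun setT (v i)).

Lemma meas_gt (beta : R) i : measurable [set w | beta < v i w].
Proof.
have := Hmeas i measurableT _ (measurable_itv `]beta, +oo[).
rewrite setTI; congr measurable; apply/seteqP; split => w /=;
  by rewrite in_itv /= andbT.
Qed.

Lemma meas_ind (beta : R) (b : bool) i :
  measurable_fun setT (fun w => ((b == (beta < v i w)%R)%:R : R)).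
Proof.
have -> : (fun w => ((b == (beta < v i w)%R)%:R : R)) =
  if b then \1_[set w | beta < v i w] else (fun w => 1 - \1_[set w | beta < v i w] w).
  apply/funext => w; case: b => /=; rewrite indicE; case: (boolP (beta < v i w)) => H.
  - by rewrite (@mem_set _ [set w | beta < v i w] w H).
  - by rewrite (@memNset _ [set w | beta < v i w] w (negP H)).
  - by rewrite (@mem_set _ [set w | beta < v i w] w H) subrr.
  - by rewrite (@memNset _ [set w | beta < v i w] w (negP H)) subr0.
case: b; first exact: measurable_indic (meas_gt beta i).
apply: measurable_funB; first exact: measurable_cst.
exact: measurable_indic (meas_gt beta i).
Qed.

Lemma meas_delta (beta : R) (d : config m) :
  measurable_fun setT (fun w => delta_beta beta (fun i => v i w) d).
Proof.
have -> : (fun w => delta_beta beta (fun i => v i w) d) =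
  (fun w => \prod_(i < m) ((d i == (beta < v i w)%R)%:R : R)).
  apply/funext => w; rewrite /delta_beta eq_ffun_prod.
  by apply: eq_bigr => i _; rewrite ffunE.
by apply: measurable_prod => i _; exact: meas_ind.
Qed.

Lemma meas_FDRX (beta : R) :
  measurable_fun setT (fun w => FDRX (fun i => v i w) (delta_beta beta (fun i => v i w))).
Proof.
rewrite /FDRX; apply: measurable_sum => d.
apply: measurable_funM; last exact: meas_delta.
apply: measurable_funM; last exact: measurable_cst.
apply: measurable_sum => i.
apply: measurable_funM; first exact: measurable_cst.
apply: measurable_funB; first exact: measurable_cst.
exact: Hmeas.
Qed.

Lemma meas_A (beta : R) :
  measurable [set w | delta_beta beta (fun i => v i w) (config0 m) = 0].
Proof.
have := meas_delta beta (config0 m) measurableT _ (measurable_set1 (0:R)).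
by rewrite setTI.
Qed.

End meas.

Definition bk (R : realType) (k : nat) : R := (k.+2%:R)^-1.

Lemma bk_gt0 (R : realType) k : 0 < bk R k.
Proof. by rewrite /bk invr_gt0 ltr0n. Qed.

Lemma bk_le1 (R : realType) k : bk R k <= 1.
Proof. by rewrite /bk invr_le1 ?ler1n ?unitfE ?pnatr_eq0 ?ltr0n. Qed.

Lemma bk_lt1 (R : realType) k : bk R k < 1.
Proof. by rewrite /bk invf_lt1 ?ltr1n ?ltr0n. Qed.

Lemma bk_mono (R : realType) k l : (k <= l)%N -> bk R l <= bk R k.
Proof. by move=> kl; rewrite /bk lef_pV2 ?posrE ?ltr0n // ler_nat ltnS. Qed.

Lemma bk_small (R : realType) (e : R) : 0 < e -> exists k, bk R k < e.
Proof.
move=> e0; exists (Num.truncn (e^-1)).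
rewrite /bk -[X in _ < X]invrK ltf_pV2 ?posrE ?ltr0n ?invr_gt0 //.
apply: (lt_trans (truncnS_gt (e^-1))).
by rewrite ltr_nat.
Qed.

Lemma select (R : realType) (f : nat -> R -> R) (alpha : R) :
  (forall n, {within `[(0:R), 1], continuous (f n)}) ->
  (\forall n \near \oo, alpha < f n 0) ->
  (forall k, \forall n \near \oo, f n (bk R k) < alpha) ->
  exists beta : nat -> R, (forall n, 0 <= beta n <= 1) /\ beta @ \oo --> 0 /\
    (fun n => f n (beta n)) @ \oo --> alpha.
Proof.
move=> fc H0 Hk.
pose P n k := alpha < f n 0 /\ f n (bk R k) < alpha.
have ivt n k : P n k -> exists c, c \in `[0, bk R k] /\ f n c = alpha.
  move=> [h1 h2].
  have [||c c1 c2] := @IVT R (f n) 0 (bk R k) alpha (ltW (bk_gt0 R k)).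
  - apply: continuous_subspaceW (fc n) => x /=; rewrite !in_itv /= => /andP[-> h].
    by rewrite (le_trans h (bk_le1 R k)).
  - by rewrite ge_min le_max (ltW h1) (ltW h2) orbT.
  by exists c.
pose K n := (\max_(k < n.+1 | `[< P n k >]) (k : nat))%N.
pose beta n := match pselect (exists c, c \in `[0, bk R (K n)] /\ f n c = alpha) with
  | left H => sval (cid H) | right _ => 0 end.
have b01 n : 0 <= beta n <= 1.
  rewrite /beta; case: pselect => [H|_]; last by rewrite lexx ler01.
  case: (cid H) => c [] /=; rewrite in_itv /= => /andP[c0 c1] _.
  by rewrite c0 (le_trans c1 (bk_le1 R _)).
have key K0 : \forall n \near \oo, (K0 <= K n)%N /\ P n (K n).
  near=> n.
  have PK0 : P n K0 by split; near: n; [exact: H0 | exact: Hk].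
  have K0n : (K0 < n.+1)%N by rewrite ltnS; near: n; exact: nbhs_infty_ge.
  split.
    rewrite /K (leq_bigmax_cond (Ordinal K0n)) //=; exact/asboolP.
  have hc : (0 < #|(fun k : 'I_n.+1 => `[< P n k >])|)%N.
    by apply/card_gt0P; exists (Ordinal K0n); rewrite /in_mem /=; exact/asboolP.
  have [i0 /asboolP Pi0 E] := eq_bigmax_cond (fun k : 'I_n.+1 => (k : nat)) hc.
  by rewrite /K E.
have bP n : P n (K n) -> beta n \in `[0, bk R (K n)] /\ f n (beta n) = alpha.
  move=> PK; rewrite /beta; case: pselect => [H|[]]; last exact: ivt.
  by case: (cid H).
exists beta; split => //; split.
  apply/cvgrPdist_lt => e e0.
  have [K0 HK0] := @bk_small R e e0.
  near=> n.
  have [KK PK] : (K0 <= K n)%N /\ P n (K n) by near: n; exact: key.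
  have [] := bP n PK; rewrite in_itv /= => /andP[c0 c1] _.
  rewrite sub0r normrN ger0_norm //.
  exact: (le_lt_trans c1 (le_lt_trans (bk_mono R _ _ KK) HK0)).
apply: cvg_trans (cvg_cst alpha).
apply: near_eq_cvg; near=> n.
have [_ PK] : (0 <= K n)%N /\ P n (K n) by near: n; exact: key.
by have [_ ->] := bP n PK.
Unshelve. all: try by end_near. all: typeclasses eauto. Qed.

Lemma cvg_sumI (R : realType) m (u : 'I_m -> nat -> R) (l : 'I_m -> R) :
  (forall i, u i @ \oo --> l i) ->
  (fun n => \sum_(i < m) u i n) @ \oo --> \sum_(i < m) l i.
Proof.
move=> H; apply: cvg_big => //; first exact: add_continuous.
Qed.

Lemma cvg0_eps (R : realType) (u : nat -> R) :
  (forall e, 0 < e -> \forall n \near \oo, 0 < u n < e) -> u @ \oo --> 0.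
Proof.
move=> H; apply/cvgrPdist_lt => e e0; near=> n.
have /andP[h1 h2] : 0 < u n < e by near: n; exact: H.
by rewrite sub0r normrN gtr0_norm.
Unshelve. all: by end_near. Qed.

Lemma FDRX_bnd (R : realType) m (beta : R) (v : 'I_m -> R) :
  (forall i, 0 <= v i <= 1) -> 0 <= FDRX v (delta_beta beta v) <= 1.
Proof.
move=> v01; rewrite FDRX_dhat.
set S := (\sum_(i < m) nat_of_bool (beta < v i)%R)%N.
have den0 : 0 < (maxn S 1)%:R :> R by rewrite ltr0n leq_max orbT.
have num0 : 0 <= \sum_(i < m) (beta < v i)%R%:R * (1 - v i).
  apply: sumr_ge0 => i _; apply: mulr_ge0 => //.
  by have /andP[_ h] := v01 i; rewrite subr_ge0.
apply/andP; split; first by rewrite divr_ge0 // ltW.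
rewrite ler_pdivrMr // mul1r.
apply: (@le_trans _ _ (S%:R)).
  rewrite /S natr_sum; apply: ler_sum => i _.
  have /andP[h0 h1] := v01 i.
  by rewrite ler_piMr // ?lerBlDr ?lerDl // ?ler0n.
by rewrite ler_nat leq_maxl.
Qed.

Section pb.
Context (R : realType) (dT : measure_display) (Omega : measurableType dT)
  (P : probability Omega R) (m : nat) (v : nat -> 'I_m -> Omega -> R)
  (Hmeas : forall n i, measurable_fun setT (v n i))
  (Hv01 : forall n i w, 0 <= v n i w <= 1).

Definition Fn n b w := FDRX (fun i => v n i w) (delta_beta b (fun i => v n i w)).
Definition An n b := [set w | delta_beta b (fun i => v n i w) (config0 m) = 0].

Lemma pBFDR_eq n b : pBFDR P v n b =
  fine (\int[P]_w (Fn n b w * \1_(An n b) w)%:E) / fine (\int[P]_w (\1_(An n b) w)%:E).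
Proof.
rewrite /pBFDR integral_mkcond integral_indic ?setIT; last exact: meas_A; last exact: measurableT.
congr (fine _ / _); apply: eq_integral => w _; rewrite patchE indicE /Fn /An.
case: ifP => _; rewrite ?mulr1 ?mulr0 //.
Qed.

Lemma lim_pb (b L : R) :
  {ae P, forall w, (fun n => Fn n b w * (\1_(An n b) w : R)) @ \oo --> L} ->
  {ae P, forall w, (fun n => (\1_(An n b) w : R)) @ \oo --> (1:R)} ->
  (fun n => pBFDR P v n b) @ \oo --> L.
Proof.
move=> H1 H2.
have c1 := @bdd_cvg _ _ _ P (fun n w => Fn n b w * (\1_(An n b) w : R)) L.
have c2 := @bdd_cvg _ _ _ P (fun n w => (\1_(An n b) w : R)) 1.
have c1' : (fun n => fine (\int[P]_w (Fn n b w * \1_(An n b) w)%:E)) @ \oo --> L.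
  apply: c1 => //.
  - move=> n; apply: measurable_funM; first exact: meas_FDRX.
    exact/measurable_indic/meas_A.
  - move=> n w; have /andP[h0 h1] := @FDRX_bnd _ _ b _ (fun i => Hv01 n i w).
    rewrite indicE /Fn; case: (w \in An n b); rewrite ?mulr1 ?mulr0 ?lexx ?ler01 //.
    by rewrite h0 h1.
have c2' : (fun n => fine (\int[P]_w (\1_(An n b) w : R)%:E)) @ \oo --> (1:R).
  apply: c2 => //.
  - by move=> n; exact/measurable_indic/meas_A.
  - by move=> n w; rewrite indicE; case: (w \in An n b); rewrite ?lexx ?ler01.
have H : (fun n => fine (\int[P]_w (Fn n b w * \1_(An n b) w)%:E) *
    (fine (\int[P]_w (\1_(An n b) w : R)%:E))^-1) @ \oo --> L * 1^-1.
  apply: cvgM => //; apply: cvgV => //; exact: oner_neq0.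
rewrite invr1 mulr1 in H; apply: cvg_trans H.
by apply: near_eq_cvg; apply: nearW => n /=; rewrite pBFDR_eq.
Qed.
End pb.

Lemma memb_set m (dt : 'I_m -> bool) i : (i \in [set i | ~~ dt i]) = ~~ dt i.
Proof. by apply/idP/idP => [/set_mem|H] //; exact: mem_set. Qed.

Lemma sum_m0 (R : realType) m (dt : 'I_m -> bool) :
  \sum_(i < m) (1 - (dt i)%:R) = (#|[set i | ~~ dt i]|%:R : R).
Proof.
rewrite -sum1_card natr_sum [RHS]big_mkcond /=.
by apply: eq_bigr => i _; rewrite memb_set; case: (dt i); rewrite /= ?subrr ?subr0.
Qed.

Lemma eq_near_cvg (R : realType) (u u' : nat -> R) (l : R) :
  (\forall n \near \oo, u' n = u n) -> u' @ \oo --> l -> u @ \oo --> l.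
Proof. by move=> E H; apply: cvg_trans H; apply: near_eq_cvg. Qed.


Theorem theorem9 (R : realType) (dT : measure_display) (Omega : measurableType dT)
  (P : probability Omega R) (m : nat)
  (v : nat -> 'I_m -> Omega -> R)        (* v n i w = pi(Upsilon_{1i} | X_n(w)) *)
  (dt : 'I_m -> bool)                      (* true configuration d^t *)
  (J : bool -> 'I_m -> R)                  (* J k i = J(Upsilon_{ki}) = J(H_{ki}) *)
  (Hmeas : forall n i, measurable_fun setT (v n i))
  (Hv01 : forall n i w, 0 <= v n i w <= 1)
  (* standing assumption (Shalizi): a.s. n^{-1} log pi(Upsilon_{ki}|X_n) -> -J(Upsilon_{ki}),
     with pi(Upsilon_{1i}|X_n) = v_{in} and pi(Upsilon_{0i}|X_n) = 1 - v_{in} *)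
  (HJ1 : forall i, {ae P, forall w,
      (fun n : nat => n%:R^-1 * ln (v n i w)) @ \oo --> - J true i})
  (HJ0 : forall i, {ae P, forall w,
      (fun n : nat => n%:R^-1 * ln (1 - v n i w)) @ \oo --> - J false i})
  (HJtrue : forall i, J (dt i) i = 0)
  (HJnull : forall i, dt i = false -> 0 < J true i)
  (HJalt : forall i, dt i = true -> 0 < J false i)
  (* known fact (Chandra and Bhattacharya 2017) *)
  (Hcont : forall n, {within `[(0:R), 1], continuous (pBFDR P v n)})
  (Hmono : forall n, {in `[(0:R), (1:R)] &, forall a b : R, a <= b -> pBFDR P v n b <= pBFDR P v n a})
  (m0 : nat) (Hm0 : m0 = #|[set i | ~~ dt i]|)
  (Hm0pos : (1 <= m0)%N) (Hm0m : (m0 < m)%N) :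
  forall alpha : R, 0 < alpha -> alpha < m0%:R / m%:R ->
  exists beta : nat -> R,
    (forall n, 0 <= beta n <= 1) /\
    beta @ \oo --> 0 /\
    (fun n => pBFDR P v n (beta n)) @ \oo --> alpha.
Proof.
move=> alpha a0 am.
pose G w := forall i, ((fun n : nat => n%:R^-1 * ln (v n i w)) @ \oo --> - J true i) /\
  ((fun n : nat => n%:R^-1 * ln (1 - v n i w)) @ \oo --> - J false i).
have HG : {ae P, forall w, G w}.
  apply: filter_forall => i; apply: filterS2 (HJ1 i) (HJ0 i) => w h1 h2; by split.
have small0 w : G w -> forall i, dt i = false -> forall e, 0 < e ->
    \forall n \near \oo, 0 < v n i w < e.
  by move=> gw i hi; apply: (@null_small R (fun n => v n i w) (J true i) (fun n => Hv01 n i w) (HJnull i hi) (gw i).1).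
have small1 w : G w -> forall i, dt i = true -> forall e, 0 < e ->
    \forall n \near \oo, 0 < 1 - v n i w < e.
  move=> gw i hi; apply: (@null_small R (fun n => 1 - v n i w) (J false i) _ (HJalt i hi) (gw i).2).
  by move=> n; have /andP[h0 h1] := Hv01 n i w; apply/andP; split; lra.
have vcvg w : G w -> forall i, (fun n => v n i w) @ \oo --> ((dt i)%:R : R).
  move=> gw i; case E: (dt i); last exact: (@cvg0_eps R _ (small0 w gw i E)).
  have H : (fun n => 1 - (1 - v n i w)) @ \oo --> (1:R) - 0.
    apply: cvgB; [exact: cvg_cst | exact: (@cvg0_eps R _ (small1 w gw i E))].
  rewrite subr0 in H; rewrite (_ : (true%:R : R) = 1) //; apply: eq_near_cvg H.
  by apply: nearW => n /=; rewrite subKr.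
have Hm : (0 < m)%N by apply: leq_ltn_trans Hm0m.
have exalt : exists i, dt i.
  apply/existsP; apply: contraLR Hm0m; rewrite negb_exists => /forallP H.
  rewrite Hm0 -leqNgt (@eq_card _ _ 'I_m) ?card_ord //.
  by move=> i; rewrite memb_set H.
have ev0 w : G w -> \forall n \near \oo, forall i, 0 < v n i w.
  move=> gw; apply: filter_forall => i; case E: (dt i).
  + apply: filterS (small1 w gw i E 1 ltr01) => n /andP[_ h]; lra.
  + by apply: filterS (small0 w gw i E 1 ltr01) => n /andP[h _].
have lim0 : (fun n => pBFDR P v n 0) @ \oo --> (m0%:R / m%:R : R).
  apply: (@lim_pb R dT Omega P m v Hmeas Hv01).
  - apply: filterS HG => w gw.
    have ev := ev0 w gw.
    have Hl : (fun n => (\sum_(i < m) (1 - v n i w)) * (m%:R)^-1) @ \oo -->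
        (\sum_(i < m) (1 - (dt i)%:R)) * (m%:R : R)^-1.
      apply: cvgM; last exact: cvg_cst.
      by apply: cvg_sumI => i; apply: cvgB; [exact: cvg_cst | exact: vcvg].
    rewrite sum_m0 -Hm0 in Hl; apply: eq_near_cvg Hl.
    apply: filterS ev => n ev.
    have -> : (\1_(An _ _ _ _ v n 0) w : R) = 1.
      rewrite indicE mem_set //; apply/delta0P.
      by exists (Ordinal Hm); exact: ev.
    rewrite mulr1 /Fn FDRX_dhat; apply/esym.
    rewrite (eq_bigr (fun i => 1 - v n i w)); last by move=> i _; rewrite ev mul1r.
    rewrite (eq_bigr (fun i => 1%N)); last by move=> i _; rewrite ev.
    by rewrite sum_nat_const card_ord muln1 (maxn_idPl Hm).
  - apply: filterS HG => w gw; apply: eq_near_cvg (cvg_cst (1:R)).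
    apply: filterS (ev0 w gw) => n ev.
    rewrite indicE mem_set //; apply/delta0P.
    by exists (Ordinal Hm); exact: ev.
have exalt_i : {i | dt i}.
  by apply: sigW.
have limk k : (fun n => pBFDR P v n (bk R k)) @ \oo --> 0.
  have evk w : G w -> \forall n \near \oo, forall i, (bk R k < v n i w) = dt i.
    move=> gw; apply: filter_forall => i; case E: (dt i).
    + apply: filterS (small1 w gw i E (1 - bk R k) _) => [n /andP[_ h]|].
        by have : bk R k < v n i w by lra.
      by rewrite subr_gt0 bk_lt1.
    + apply: filterS (small0 w gw i E (bk R k) (bk_gt0 R k)) => n /andP[_ h].
      by apply/negbTE; rewrite -leNgt ltW.
  have [i0 Hi0] := exalt_i.
  apply: (@lim_pb R dT Omega P m v Hmeas Hv01).
  - apply: filterS HG => w gw.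
    pose D := maxn (\sum_(i < m) nat_of_bool (dt i)) 1.
    have Hl : (fun n => (\sum_(i < m) (dt i)%:R * (1 - v n i w)) * (D%:R)^-1) @ \oo -->
        (\sum_(i < m) (dt i)%:R * (1 - (dt i)%:R)) * (D%:R : R)^-1.
      apply: cvgM; last exact: cvg_cst.
      apply: cvg_sumI => i; apply: cvgM; first exact: cvg_cst.
      by apply: cvgB; [exact: cvg_cst | exact: vcvg].
    rewrite big1 ?mul0r in Hl; last by move=> i _; case: (dt i); rewrite ?subrr ?mulr0 ?mul0r.
    apply: eq_near_cvg Hl.
    apply: filterS (evk w gw) => n ev.
    have -> : (\1_(An _ _ _ _ v n (bk R k)) w : R) = 1.
      rewrite indicE mem_set //; apply/delta0P.
      by exists i0; rewrite ev.
    rewrite mulr1 /Fn FDRX_dhat; apply/esym.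
    rewrite (eq_bigr (fun i => (dt i)%:R * (1 - v n i w))); last by move=> i _; rewrite ev.
    by rewrite (eq_bigr (fun i => nat_of_bool (dt i))); last by move=> i _; rewrite ev.
  - apply: filterS HG => w gw; apply: eq_near_cvg (cvg_cst (1:R)).
    apply: filterS (evk w gw) => n ev.
    rewrite indicE mem_set //; apply/delta0P.
    by exists i0; rewrite ev.
have [beta [b01 [bcv fcv]]] := @select R (fun n b => pBFDR P v n b) alpha Hcont
  (cvgr_gt _ lim0 _ am) (fun k => cvgr_lt _ (limk k) _ a0).
by exists beta.
Qed.
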